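(* Let $1\le r\le n$ be integers and $A\in RB(r,n)$. Then $$\mathrm{per}\!\left(\tfrac1r A\right)\ \le\ (\sqrt2)^n\, F\!\left(\tfrac1r A\right).$$
   Context: $RB(r,n)$ is the set of $n\times n$ $0/1$ matrices all of whose row and column sums equal $r$. $\mathrm{per}$ is the permanent. For a doubly-stochastic $n\times n$ matrix $P$, $F(P)=\prod_{1\le i,j\le n}(1-P(i,j))^{1-P(i,j)}$, with $0^0=1$. *)

(* Defs.v *)
From mathcomp Require Import all_boot all_order all_algebra all_fingroup.
From mathcomp Require Import all_classical all_reals all_analysis.
Set Implicit Arguments. Unset Strict Implicit. Unset Printing Implicit Defensive.
Import Order.TTheory GRing.Theory Num.Theory.
Local Open Scope ring_scope.

Definition per (R : comRingType) (n : nat) (A : 'M[R]_n) : R :=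
  \sum_(s : 'S_n) \prod_(i < n) A i (s i).

Definition RB (R : realType) (r n : nat) (A : 'M[R]_n) : Prop :=
  (forall i j, A i j = 0 \/ A i j = 1) /\
  (forall i, \sum_(j < n) A i j = r%:R) /\
  (forall j, \sum_(i < n) A i j = r%:R).

(* F(P) = prod_{i,j} (1 - P(i,j))^(1 - P(i,j)), with 0^0 = 1 (powR 0 0 = 1). *)
Definition Fdef (R : realType) (n : nat) (P : 'M[R]_n) : R :=
  \prod_(i < n) \prod_(j < n) powR (1 - P i j) (1 - P i j).

(* Main.v *)
Require Import Defs.
From mathcomp Require Import all_boot all_order all_algebra all_fingroup.
From mathcomp Require Import all_classical all_reals all_analysis.
From mathcomp Require Import ring lra.
Import Order.TTheory GRing.Theory Num.Theory.
Local Open Scope ring_scope.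

Lemma per_minor (R : comRingType) n (A : 'M[R]_n.+1) i0 j0 :
  \sum_(s : 'S_n.+1 | s i0 == j0) \prod_k A k (s k)
  = A i0 j0 * per (row' i0 (col' j0 A)).
Proof.
rewrite (reindex (lift_perm i0 j0)); last first.
  pose ulsf i (s : 'S_n.+1) k := odflt k (unlift (s i) (s (lift i k))).
  have ulsfK i (s : 'S_n.+1) k: lift (s i) (ulsf i s k) = s (lift i k).
    rewrite /ulsf; have:= neq_lift i k.
    by rewrite -(can_eq (permK s)) => /unlift_some[] ? ? ->.
  have inj_ulsf: injective (ulsf i0 _).
    move=> s; apply: can_inj (ulsf (s i0) s^-1%g) _ => k'.
    by rewrite {1}/ulsf ulsfK !permK liftK.
  exists (fun s => perm (inj_ulsf s)) => [s _ | s].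
    by apply/permP=> k'; rewrite permE /ulsf lift_perm_lift lift_perm_id liftK.
  move/(s _ =P _) => si0; apply/permP=> k.
  case: (unliftP i0 k) => [k'|] ->; rewrite ?lift_perm_id //.
  by rewrite lift_perm_lift -si0 permE ulsfK.
rewrite /per big_distrr /=.
apply: eq_big => [s | s _]; first by rewrite lift_perm_id eqxx.
rewrite (bigD1_ord i0) //= lift_perm_id; congr (_ * _).
by apply: eq_bigr => k _; rewrite !mxE lift_perm_lift.
Qed.

Lemma per_scale (R : comRingType) n (c : R) (A : 'M[R]_n) :
  per (c *: A) = c ^+ n * per A.
Proof.
rewrite /per big_distrr /=; apply: eq_bigr => s _.
rewrite -[in c ^+ n](card_ord n) -prodr_const -big_split /=.
by apply: eq_bigr => i _; rewrite mxE.
Qed.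

Lemma ln_le_sub1 (R : realType) (y : R) : 0 < y -> ln y <= y - 1.
Proof.
move=> y0; have := @le_ln1Dx R (y - 1); rewrite [1 + _]addrC subrK; apply.
lra.
Qed.

Lemma logsum_pt (R : realType) (x c b : R) :
  0 <= x -> 0 < c -> (b = 0 \/ b = 1) -> (b = 0 -> x = 0) ->
  b * (x - c) <= x * ln x - x * ln c.
Proof.
move=> x0 c0 hb hbx.
have [->|xpos] := eqVneq x 0.
  rewrite ln0 // !mul0r subrr; case: hb => ->; lra.
have xp : 0 < x by rewrite lt_neqAle eq_sym xpos x0.
have b1 : b = 1.
  by case: hb => // b0; move: xpos; rewrite (hbx b0) eqxx.
rewrite b1 mul1r.
have h1 := @ln_le_sub1 R _ (divr_gt0 c0 xp).
rewrite ln_div ?posrE // in h1.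
have h2 : x * (ln c - ln x) <= x * (c / x - 1) by rewrite ler_wpM2l // ltW.
have e : x * (c / x - 1) = c - x.
  by rewrite mulrBr mulr1 mulrCA divff ?mulr1 // gt_eqF.
rewrite e mulrBr in h2.
lra.
Qed.

Lemma logsum (R : realType) (I : finType) (x b : I -> R) :
  (forall k, 0 <= x k) -> (forall k, b k = 0 \/ b k = 1) ->
  (forall k, b k = 0 -> x k = 0) ->
  (\sum_k x k) * ln (\sum_k x k) <=
  (\sum_k x k) * ln (\sum_k b k) + \sum_k x k * ln (x k).
Proof.
move=> x0 hb hbx.
have b0 : forall k, 0 <= b k by move=> k; case: (hb k) => ->; lra.
have S0 : 0 <= \sum_k x k by apply: sumr_ge0.
have [SE|Sn] := eqVneq (\sum_k x k) 0.
  have xz : forall k, x k = 0.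
    by move=> k; move/eqP: SE; rewrite psumr_eq0 //; move/allP/(_ k (mem_index_enum _))/eqP.
  rewrite SE !mul0r add0r big1 // => k _; by rewrite xz mul0r.
have Sp : 0 < \sum_k x k by rewrite lt_neqAle eq_sym Sn S0.
have N0 : 0 <= \sum_k b k by apply: sumr_ge0.
have [NE|Nn] := eqVneq (\sum_k b k) 0.
  have bz : forall k, b k = 0.
    by move=> k; move/eqP: NE; rewrite psumr_eq0 //; move/allP/(_ k (mem_index_enum _))/eqP.
  by move: Sn; rewrite big1 ?eqxx // => k _; apply: hbx.
have Np : 0 < \sum_k b k by rewrite lt_neqAle eq_sym Nn N0.
set S := \sum_k x k in Sp Sn S0 *; set N := \sum_k b k in Np Nn N0 *.
have cp : 0 < S / N by apply: divr_gt0.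
have key : \sum_k b k * (x k - S / N) <= \sum_k (x k * ln (x k) - x k * ln (S / N)).
  by apply: ler_sum => k _; exact: logsum_pt (x0 k) cp (hb k) (@hbx k).
have e1 : \sum_k b k * (x k - S / N) = 0.
  under eq_bigr => k _ do rewrite mulrBr.
  rewrite sumrB -mulr_suml.
  have -> : \sum_k b k * x k = S.
    by apply: eq_bigr => k _; case: (hb k) => e; rewrite e ?mul1r // mul0r hbx.
  rewrite -/N mulrC mulfVK ?subrr //.
have e2 : \sum_k (x k * ln (x k) - x k * ln (S / N)) =
   \sum_k x k * ln (x k) - S * (ln S - ln N).
  by rewrite sumrB -mulr_suml ln_div ?posrE.
rewrite e1 e2 in key.
lra.
Qed.
Set Implicit Arguments. Unset Strict Implicit. Unset Printing Implicit Defensive.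

Definition is01 (R : realType) n (B : 'M[R]_n) := forall i j, B i j = 0 \/ B i j = 1.
Definition rs (R : realType) n (B : 'M[R]_n) i := \sum_j B i j.

Lemma is01_minor (R : realType) n (B : 'M[R]_n.+1) i k :
  is01 B -> is01 (row' i (col' k B)).
Proof. by move=> h a b; rewrite !mxE. Qed.

Lemma rs_minor (R : realType) n (B : 'M[R]_n.+1) i k j :
  rs (row' i (col' k B)) j = rs B (lift i j) - B (lift i j) k.
Proof.
rewrite /rs [in RHS](bigD1_ord k) //= addrC addrK.
by apply: eq_bigr => l _; rewrite !mxE.
Qed.

Lemma rs_nat (R : realType) n (B : 'M[R]_n) i :
  is01 B -> exists N : nat, rs B i = N%:R.
Proof.
move=> h; exists (\sum_(j < n) nat_of_bool (B i j == 1)).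
rewrite natr_sum; apply: eq_bigr => j _; case: (h i j) => ->; rewrite ?eqxx //.
by rewrite eq_sym oner_eq0.
Qed.

Lemma w01 (R : realType) n (B : 'M[R]_n) (s : 'S_n) : is01 B ->
  \prod_k B k (s k) = 0 \/ \prod_k B k (s k) = 1.
Proof.
move=> h; apply: (big_ind (fun x : R => x = 0 \/ x = 1)); first by right.
  by move=> x y [->|->] [->|->]; rewrite ?mul0r ?mulr0 ?mul1r; auto.
by move=> k _; apply: h.
Qed.

Lemma breg (R : realType) (psi : R -> R)
  (Hp0 : forall N : nat, 0 <= psi N%:R)
  (Hp1 : forall N : nat, (1 <= N)%N ->
     ln (N%:R : R) + (N%:R - 1) * psi (N%:R - 1) <= N%:R * psi N%:R)
  n (B : 'M[R]_n) : is01 B -> ln (per B) <= \sum_i psi (rs B i).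
Proof.
elim: n B => [|n IH] B hB.
  rewrite big_ord0 /per.
  have -> : \sum_(s : 'S_0) \prod_(i < 0) B i (s i) = 1.
    under eq_bigr do rewrite big_ord0.
    by rewrite sumr_const card_Sn.
  by rewrite ln1.
have sum0 : 0 <= \sum_i psi (rs B i).
  by apply: sumr_ge0 => i _; have [N ->] := rs_nat i hB; apply: Hp0.
pose w (s : 'S_n.+1) := \prod_k B k (s k).
have w01' : forall s, w s = 0 \/ w s = 1 by move=> s; exact: w01 s hB.
have w0 : forall s, 0 <= w s by move=> s; case: (w01' s) => ->; lra.
have PE : per B = \sum_s w s by [].
have P0 : 0 <= per B by rewrite PE; apply: sumr_ge0.
have [PZ|Pn] := eqVneq (per B) 0.
  by rewrite PZ ln0.
have Pp : 0 < per B by rewrite lt_neqAle eq_sym Pn P0.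
pose Q (i k : 'I_n.+1) := \sum_(s : 'S_n.+1 | s i == k) w s.
have QP : forall i, \sum_k Q i k = per B.
  by move=> i; rewrite PE (partition_big (fun s : 'S_n.+1 => s i) predT).
have Qm : forall i k, Q i k = B i k * per (row' i (col' k B)).
  by move=> i k; rewrite /Q /w per_minor.
have Q0 : forall i k, 0 <= Q i k by move=> i k; apply: sumr_ge0.
have QB : forall i k, B i k = 0 -> Q i k = 0 by move=> i k e; rewrite Qm e mul0r.
have Qs : forall i, \sum_k Q i k * ln (Q i k) = \sum_s w s * ln (Q i (s i)).
  move=> i; rewrite (partition_big (fun s : 'S_n.+1 => s i) predT) //=.
  by apply: eq_bigr => k _; rewrite /Q mulr_suml; apply: eq_bigr => s /eqP ->.
have step1 : forall i, per B * ln (per B) <=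
    \sum_s w s * (ln (rs B i) + ln (Q i (s i))).
  move=> i; have := @logsum R _ _ _ (Q0 i) (hB i) (QB i).
  rewrite QP Qs => h; apply: (le_trans h).
  under [X in _ <= X]eq_bigr do rewrite mulrDr.
  by rewrite big_split /= -mulr_suml -PE.
have step2 : (n.+1)%:R * (per B * ln (per B)) <=
    \sum_s w s * \sum_i (ln (rs B i) + ln (Q i (s i))).
  have -> : (n.+1)%:R * (per B * ln (per B)) = \sum_(i < n.+1) (per B * ln (per B)).
    by rewrite sumr_const card_ord mulr_natl.
  under [X in _ <= X]eq_bigr do rewrite mulr_sumr.
  rewrite exchange_big /=.
  by apply: ler_sum => i _; apply: step1.
have step3 : forall s, w s * \sum_i (ln (rs B i) + ln (Q i (s i))) <=
    w s * ((n.+1)%:R * \sum_j psi (rs B j)).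
  move=> s; case: (w01' s) => ws; first by rewrite ws !mul0r.
  rewrite ws !mul1r.
  have Bs : forall j, B j (s j) = 1.
    move=> j; case: (hB j (s j)) => // e.
    by move: ws; rewrite /w (bigD1 j) //= e mul0r => /eqP; rewrite eq_sym oner_eq0.
  have hQ : forall i, ln (Q i (s i)) <=
      \sum_j psi (rs B j - B j (s i)) - psi (rs B i - 1).
    move=> i; rewrite Qm Bs mul1r.
    have h1 := IH _ (is01_minor i (s i) hB).
    have e : \sum_j psi (rs (row' i (col' (s i) B)) j) =
        \sum_j psi (rs B (lift i j) - B (lift i j) (s i)).
      by apply: eq_bigr => j _; rewrite rs_minor.
    rewrite (bigD1_ord i) //= Bs.
    lra.
  have hsum : \sum_i (ln (rs B i) + ln (Q i (s i))) <=
      \sum_i (ln (rs B i) + \sum_j psi (rs B j - B j (s i)) - psi (rs B i - 1)).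
    by apply: ler_sum => i _; have := hQ i; lra.
  have e2 : \sum_i (ln (rs B i) + \sum_j psi (rs B j - B j (s i)) - psi (rs B i - 1))
      = \sum_j (ln (rs B j) + \sum_k psi (rs B j - B j k) - psi (rs B j - 1)).
    rewrite !sumrB !big_split /=; congr (_ + _ - _).
    rewrite exchange_big /=; apply: eq_bigr => j _.
    by rewrite [RHS](reindex_inj (@perm_inj _ s)).
  apply: (le_trans hsum); rewrite e2 mulr_sumr; apply: ler_sum => j _.
  have e3 : \sum_k psi (rs B j - B j k) =
      rs B j * psi (rs B j - 1) + ((n.+1)%:R - rs B j) * psi (rs B j).
    have -> : \sum_k psi (rs B j - B j k) =
        \sum_k (B j k * psi (rs B j - 1) + (1 - B j k) * psi (rs B j)).
      by apply: eq_bigr => k _; case: (hB j k) => ->; rewrite ?subr0 ?subrr; lra.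
    rewrite big_split /= -!mulr_suml sumrB sumr_const card_ord.
    by rewrite /rs.
  have [N hN] := rs_nat j hB.
  have N1 : (1 <= N)%N.
    have : 1 <= rs B j.
      rewrite /rs (bigD1 (s j)) //= Bs lerDl; apply: sumr_ge0 => k _.
      by case: (hB j k) => ->.
    by rewrite hN ler1n.
  have := Hp1 N N1.
  rewrite e3 hN.
  nra.
have step4 : (n.+1)%:R * (per B * ln (per B)) <=
    per B * ((n.+1)%:R * \sum_j psi (rs B j)).
  apply: (le_trans step2); rewrite PE mulr_suml; apply: ler_sum => s _.
  exact: step3.
have np : 0 < (n.+1)%:R * per B by rewrite mulr_gt0.
rewrite -(ler_pM2l np); move: step4; rewrite !mulrA [per B * _]mulrC.
by [].
Qed.

Lemma lnsub_le (R : realType) (y : R) : 1 < y -> ln y - ln (y - 1) <= 1 / (y - 1).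
Proof.
move=> y1.
have p1 : 0 < y - 1 by lra.
have p0 : 0 < y by lra.
have h := @ln_le_sub1 R _ (divr_gt0 p0 p1).
rewrite ln_div ?posrE // in h.
have -> : 1 / (y - 1) = y / (y - 1) - 1 by field; rewrite ?lt0r_neq0.
exact: h.
Qed.

Lemma lnsub_ge (R : realType) (y : R) : 1 < y -> 1 / y <= ln y - ln (y - 1).
Proof.
move=> y1.
have p1 : 0 < y - 1 by lra.
have p0 : 0 < y by lra.
have h := @ln_le_sub1 R _ (divr_gt0 p1 p0).
rewrite ln_div ?posrE // in h.
have e : (y - 1) / y - 1 = - (1 / y) by field; rewrite ?lt0r_neq0.
rewrite e in h; lra.
Qed.

Lemma ln2_ge (R : realType) : 1 / 2 <= ln (2 : R).
Proof.
have := @lnsub_ge R 2 ltac:(lra); have -> : (2 : R) - 1 = 1 by lra.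
by rewrite ln1 subr0.
Qed.

Lemma ln2_sqrt (R : realType) : ln (2 : R) = 2 * ln (Num.sqrt 2).
Proof.
have s0 : 0 < Num.sqrt (2 : R) by rewrite sqrtr_gt0.
rewrite -{1}(@sqr_sqrtr R 2) ?lnXn ?mulr_natl //.
Qed.

Lemma ln_pow_le (R : realType) (a b : R) (p q : nat) : 0 < a -> 0 < b ->
  a ^+ p <= b ^+ q -> p%:R * ln a <= q%:R * ln b.
Proof.
move=> a0 b0 h; rewrite !mulr_natl -!lnXn //.
by rewrite ler_ln // posrE exprn_gt0.
Qed.

Lemma keyE (R : realType) (m : nat) : (2 <= m)%N ->
  (m%:R : R) ^+ 2 * ln (m%:R + 1) + m%:R * (m%:R - 1) * ln (m%:R - 1)
   - m%:R * (2 * m%:R - 1) * ln (m%:R : R) <= ln (Num.sqrt 2).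
Proof.
have l2 := @ln2_sqrt R; have l2g := @ln2_ge R.
case: m => [|[|[|[|m]]]] // _.
- have -> : (2%:R : R) + 1 = 3 by lra.
  have -> : (2%:R : R) - 1 = 1 by lra.
  have -> : (2%:R : R) = 2 by lra.
  have h := @ln_pow_le R 3 2 8 13 ltac:(lra) ltac:(lra) ltac:(lra).
  rewrite ln1; lra.
- have -> : (3%:R : R) + 1 = 2 ^+ 2 by lra.
  have -> : (3%:R : R) - 1 = 2 by lra.
  have -> : (3%:R : R) = 3 by lra.
  rewrite lnXn; last by lra.
  have h1 := @ln_pow_le R 2 3 19 12 ltac:(lra) ltac:(lra) ltac:(lra).
  have h2 := @ln_pow_le R 2 3 9 6 ltac:(lra) ltac:(lra) ltac:(lra).
  rewrite mulr_natr in h1 h2 *.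
  lra.
set M := (m.+4)%:R : R.
have M4 : 4 <= M by rewrite /M ler_nat.
have Mp : 0 < M by lra.
have b1 : ln (M + 1) + ln (M - 1) - 2 * ln M <= - (1 / M ^+ 2).
  have q0 : 0 < (M + 1) * (M - 1) / (M * M).
    by apply: divr_gt0; apply: mulr_gt0; lra.
  have h := @ln_le_sub1 R _ q0.
  have p1 : 0 < M + 1 by lra.
  have p2 : 0 < M - 1 by lra.
  have pp : 0 < (M + 1) * (M - 1) by apply: mulr_gt0.
  have pM : 0 < M * M by apply: mulr_gt0.
  have eL : ln ((M + 1) * (M - 1) / (M * M)) = ln (M + 1) + ln (M - 1) - 2 * ln M.
    rewrite ln_div ?posrE // lnM ?posrE // lnM ?posrE //; lra.
  have e : (M + 1) * (M - 1) / (M * M) - 1 = - (1 / M ^+ 2).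
    by field; rewrite lt0r_neq0.
  by rewrite e eL in h.
have b2 : ln M - ln (M - 1) <= 1 / (2 * M - 1) + 1 / (2 * M - 2).
  have h1 := @lnsub_le R (2 * M) ltac:(lra).
  have h2 := @lnsub_le R (2 * M - 1) ltac:(lra).
  have e1 : ln (2 * M) = ln 2 + ln M by rewrite lnM ?posrE //; lra.
  have e2 : ln (2 * M - 1 - 1) = ln 2 + ln (M - 1).
    by rewrite -lnM ?posrE; [congr ln; lra | lra | lra].
  have e3 : 2 * M - 1 - 1 = 2 * M - 2 by lra.
  rewrite e1 in h1; rewrite e2 e3 in h2; lra.
have c1 : M ^+ 2 * (ln (M + 1) + ln (M - 1) - 2 * ln M) <= -1.
  have e : M ^+ 2 * (- (1 / M ^+ 2)) = -1 by field; rewrite lt0r_neq0.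
  rewrite -[X in _ <= X]e.
  by apply: ler_wpM2l; [exact: exprn_ge0 (ltW Mp) | exact: b1].
have c2 : M * (ln M - ln (M - 1)) <= M * (1 / (2 * M - 1) + 1 / (2 * M - 2)).
  by apply: ler_wpM2l; [exact: ltW Mp | exact: b2].
set u := 1 / (2 * M - 1) in c2; set v := 1 / (2 * M - 2) in c2.
have hu : u * (2 * M - 1) = 1 by rewrite /u; field; rewrite lt0r_neq0 //; lra.
have hv : v * (2 * M - 2) = 1 by rewrite /v; field; rewrite lt0r_neq0 //; lra.
have u0 : 0 <= u by rewrite /u divr_ge0 //; lra.
have v0 : 0 <= v by rewrite /v divr_ge0 //; lra.
have u7 : u <= 1 / 7 by nra.
have v6 : v <= 1 / 6 by nra.
nra.
Qed.

Definition psi (R : realType) (x : R) : R :=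
  if x <= 1 then 0 else ln (Num.sqrt 2) + (x - 1) * ln (x - 1) - (x - 2) * ln x.

Lemma psi_le1 (R : realType) (x : R) : x <= 1 -> psi x = 0.
Proof. by move=> h; rewrite /psi h. Qed.

Lemma psi_gt1 (R : realType) (x : R) : 1 < x ->
  psi x = ln (Num.sqrt 2) + (x - 1) * ln (x - 1) - (x - 2) * ln x.
Proof. by move=> h; rewrite /psi leNgt h. Qed.

Lemma psi_rec (R : realType) (N : nat) : (1 <= N)%N ->
  ln (N%:R : R) + (N%:R - 1) * psi (N%:R - 1) <= N%:R * psi (N%:R : R).
Proof.
have l2 := @ln2_sqrt R; have l2g := @ln2_ge R.
case: N => [|[|[|m]]] // _.
- have -> : (1%:R : R) - 1 = 0 by lra.
  rewrite psi_le1 ?psi_le1 ?ln1; lra.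
- have -> : (2%:R : R) - 1 = 1 by lra.
  rewrite psi_le1 ?psi_gt1; try lra.
  have -> : (2 : R) - 1 = 1 by lra.
  rewrite ln1; lra.
have hk := @keyE R m.+2 isT.
rewrite -natr1 addrK.
set M := (m.+2)%:R : R in hk *.
have M2 : 2 <= M by rewrite /M ler_nat.
rewrite psi_gt1; last lra.
rewrite psi_gt1; last lra.
have -> : M + 1 - 1 = M by lra.
have -> : M + 1 - 2 = M - 1 by lra.
nra.
Qed.

Lemma psi_ge0 (R : realType) (N : nat) : 0 <= psi (N%:R : R).
Proof.
elim: N => [|N IH]; first by rewrite psi_le1 //; lra.
have h := @psi_rec R N.+1 isT.
rewrite -natr1 addrK in h.
have l0 : 0 <= ln (N%:R + 1 : R) by apply: ln_ge0; have := ler0n R N; lra.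
have n0 : 0 <= (N%:R : R) by apply: ler0n.
rewrite natr1 in l0 h *.
have p0 : 0 < (N.+1%:R : R) by rewrite ltr0n.
rewrite -(pmulr_rge0 _ p0); nra.
Qed.

Lemma psi_bound (R : realType) (r : nat) : (1 <= r)%N ->
  psi (r%:R : R) <= ln (r%:R : R) + ln (Num.sqrt 2)
     + r%:R * ((1 - r%:R^-1) * ln (1 - r%:R^-1)).
Proof.
have l2 := @ln2_sqrt R; have l2g := @ln2_ge R.
case: r => [|[|m]] // _.
  rewrite psi_le1 // invr1 subrr mul0r mulr0 ln1; lra.
set M := (m.+2)%:R : R.
have M2 : 2 <= M by rewrite /M ler_nat.
have M0 : 0 < M by lra.
rewrite psi_gt1; last lra.
have e1 : 1 - M^-1 = (M - 1) / M by field; rewrite lt0r_neq0.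
have e2 : ln ((M - 1) / M) = ln (M - 1) - ln M.
  by rewrite ln_div // posrE; lra.
have e3 : M * ((M - 1) / M * (ln (M - 1) - ln M)) = (M - 1) * (ln (M - 1) - ln M).
  by field; rewrite lt0r_neq0.
rewrite e1 e2 e3; lra.
Qed.

Lemma powR_self (R : realType) (q : R) : powR q q = expR (q * ln q).
Proof.
rewrite /powR; case: eqP => [->|_] //.
by rewrite ?eqxx mul0r expR0.
Qed.

Lemma powR_entry (R : realType) (c a : R) : (a = 0 \/ a = 1) ->
  powR (1 - c * a) (1 - c * a) = expR (a * ((1 - c) * ln (1 - c))).
Proof.
case=> ->; rewrite powR_self; last by rewrite !mulr1 mul1r.
by rewrite mulr0 subr0 ln1 !mulr0 mul0r.
Qed.

Unset Implicit Arguments.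
Theorem mainTheorem9 (R : realType) (r n : nat) (A : 'M[R]_n) :
  (1 <= r)%N -> (r <= n)%N -> RB r A ->
  per ((r%:R)^-1 *: A) <= (Num.sqrt (2 : R)) ^+ n * Fdef ((r%:R)^-1 *: A).
Proof.
move=> r1 rn [h01 [hrow _]].
have hB : is01 A := h01.
set t := (1 - (r%:R : R)^-1) * ln (1 - (r%:R : R)^-1).
have Fe : Fdef ((r%:R)^-1 *: A) = expR (n%:R * (r%:R * t)).
  rewrite /Fdef.
  have hi : forall i, \prod_j powR (1 - ((r%:R)^-1 *: A) i j) (1 - ((r%:R)^-1 *: A) i j)
       = expR (r%:R * t).
    move=> i; under eq_bigr => j _ do rewrite mxE (@powR_entry R _ _ (h01 i j)).
    by rewrite -expR_sum -mulr_suml hrow.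
  under eq_bigr => i _ do rewrite hi.
  by rewrite -expR_sum sumr_const card_ord -[(r%:R * t) *+ n]mulr_natl.
rewrite Fe per_scale.
have hb := breg (@psi_ge0 R) (@psi_rec R) hB.
have e : \sum_i psi (rs A i) = n%:R * psi (r%:R : R).
  by rewrite /rs; under eq_bigr do rewrite hrow; rewrite sumr_const card_ord mulr_natl.
rewrite e in hb.
have per0 : 0 <= per A.
  apply: sumr_ge0 => s _; apply: prodr_ge0 => i _.
  by case: (h01 i (s i)) => ->; lra.
have s0 : 0 < Num.sqrt (2 : R) by rewrite sqrtr_gt0; lra.
have rp : 0 < (r%:R : R) by rewrite ltr0n.
have rhs0 : 0 <= Num.sqrt (2 : R) ^+ n * expR (n%:R * (r%:R * t)).
  by apply: mulr_ge0; [apply: exprn_ge0; lra | apply: expR_ge0].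
have [PZ|Pn] := eqVneq (per A) 0.
  by rewrite PZ mulr0.
have Pp : 0 < per A by rewrite lt_neqAle eq_sym Pn per0.
have hP : per A <= expR (n%:R * psi (r%:R : R)).
  by rewrite -[X in X <= _]lnK ?posrE // ler_expR.
have er : expR (n%:R * ln (r%:R : R)) = r%:R ^+ n.
  by rewrite mulr_natl -lnXn // lnK // posrE exprn_gt0.
have es : expR (n%:R * ln (Num.sqrt (2 : R))) = Num.sqrt 2 ^+ n.
  by rewrite mulr_natl -lnXn // lnK // posrE exprn_gt0.
have key : expR (n%:R * psi (r%:R : R)) <=
    r%:R ^+ n * (Num.sqrt 2 ^+ n * expR (n%:R * (r%:R * t))).
  rewrite -er -es -!expRD ler_expR.
  have pb := @psi_bound R r r1.
  have n0 : 0 <= (n%:R : R) by apply: ler0n.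
  rewrite -/t in pb.
  nra.
have rn0 : (r%:R : R) ^+ n != 0 by rewrite expf_neq0 // lt0r_neq0.
have iv0 : 0 <= ((r%:R : R)^-1) ^+ n by apply: exprn_ge0; rewrite invr_ge0 ltW.
apply: (le_trans (ler_wpM2l iv0 hP)).
apply: (le_trans (ler_wpM2l iv0 key)).
by rewrite exprVn [X in X <= _]mulrA mulVf // mul1r.
Qed.
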